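(* Let $(X,d,f)$ be a dynamical system with $f$ uniformly continuous, let $(\hat X,\hat d)$ be the completion of $(X,d)$ and $\hat f$ the (uniformly continuous) extension of $f$ to $\hat X$. If $(X,d,f)$ has the shadowing property, then so does $(\hat X,\hat d,\hat f)$; and if $(X,d,f)$ has the finite shadowing property, then so does $(\hat X,\hat d,\hat f)$.
   Context: A dynamical system $(X,d,f)$ is a separable metric space with continuous $f:X\to X$. A $\delta$-pseudo-orbit is a finite or infinite sequence $(x_n)$ with $d(f(x_n),x_{n+1})<\delta$ for consecutive indices; $x$ $\varepsilon$-shadows it if $d(f^n(x),x_n)<\varepsilon$ for all indices. Finite shadowing property: for every $\varepsilon>0$ there is $\delta>0$ such that every finite $\delta$-pseudo-orbit is $\varepsilon$-shadowed by some point; shadowing property: same with infinite pseudo-orbits. *)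

(* Defs.v *)
From Stdlib Require Import Reals.
Open Scope R_scope.

Definition is_metric {X : Type} (d : X -> X -> R) : Prop :=
  (forall x y, 0 <= d x y) /\
  (forall x y, d x y = 0 <-> x = y) /\
  (forall x y, d x y = d y x) /\
  (forall x y z, d x z <= d x y + d y z).

Definition separable {X : Type} (d : X -> X -> R) : Prop :=
  exists (D : X -> Prop) (code : X -> nat),
    (forall x y, D x -> D y -> code x = code y -> x = y) /\
    (forall x eps, 0 < eps -> exists y, D y /\ d x y < eps).

Definition cauchy_seq {X : Type} (d : X -> X -> R) (u : nat -> X) : Prop :=
  forall eps, 0 < eps -> exists N, forall m n, (N <= m)%nat -> (N <= n)%nat ->
    d (u m) (u n) < eps.

Definition converges_to {X : Type} (d : X -> X -> R) (u : nat -> X) (l : X) : Prop :=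
  forall eps, 0 < eps -> exists N, forall n, (N <= n)%nat -> d (u n) l < eps.

Definition complete_metric {X : Type} (d : X -> X -> R) : Prop :=
  forall u, cauchy_seq d u -> exists l, converges_to d u l.

Definition uniformly_continuous {X Y : Type} (dX : X -> X -> R) (dY : Y -> Y -> R)
  (f : X -> Y) : Prop :=
  forall eps, 0 < eps -> exists delta, 0 < delta /\
    forall x y, dX x y < delta -> dY (f x) (f y) < eps.

Definition isometry {X Y : Type} (dX : X -> X -> R) (dY : Y -> Y -> R) (i : X -> Y) : Prop :=
  forall x y, dY (i x) (i y) = dX x y.

Definition dense_range {X Y : Type} (dY : Y -> Y -> R) (i : X -> Y) : Prop :=
  forall y eps, 0 < eps -> exists x, dY (i x) y < eps.

Definition is_completion {X Y : Type} (dX : X -> X -> R) (dY : Y -> Y -> R) (i : X -> Y) : Prop :=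
  is_metric dY /\ complete_metric dY /\ isometry dX dY i /\ dense_range dY i.

Fixpoint iter {X : Type} (f : X -> X) (n : nat) (x : X) : X :=
  match n with O => x | S k => f (iter f k x) end.

Definition pseudo_orbit {X : Type} (d : X -> X -> R) (f : X -> X) (delta : R) (x : nat -> X) : Prop :=
  forall n, d (f (x n)) (x (S n)) < delta.

Definition finite_pseudo_orbit {X : Type} (d : X -> X -> R) (f : X -> X) (delta : R)
  (N : nat) (x : nat -> X) : Prop :=
  forall n, (n < N)%nat -> d (f (x n)) (x (S n)) < delta.

Definition shadows {X : Type} (d : X -> X -> R) (f : X -> X) (eps : R) (z : X) (x : nat -> X) : Prop :=
  forall n, d (iter f n z) (x n) < eps.

Definition finite_shadows {X : Type} (d : X -> X -> R) (f : X -> X) (eps : R)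
  (N : nat) (z : X) (x : nat -> X) : Prop :=
  forall n, (n <= N)%nat -> d (iter f n z) (x n) < eps.

Definition shadowing_property {X : Type} (d : X -> X -> R) (f : X -> X) : Prop :=
  forall eps, 0 < eps -> exists delta, 0 < delta /\
    forall x, pseudo_orbit d f delta x -> exists z, shadows d f eps z x.

Definition finite_shadowing_property {X : Type} (d : X -> X -> R) (f : X -> X) : Prop :=
  forall eps, 0 < eps -> exists delta, 0 < delta /\
    forall N x, finite_pseudo_orbit d f delta N x -> exists z, finite_shadows d f eps N z x.

(* Main.v *)
Require Import Defs.
From Stdlib Require Import Reals.
From Stdlib Require Import Lra ClassicalEpsilon.
Open Scope R_scope.

Lemma approx_seq {X Xh : Type} (dh : Xh -> Xh -> R) (i : X -> Xh) :
  dense_range dh i -> forall (y : nat -> Xh) r, 0 < r ->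
  exists x : nat -> X, forall n, dh (i (x n)) (y n) < r.
Proof.
  intros Hd y r Hr.
  exists (fun n => proj1_sig (constructive_indefinite_description _ (Hd (y n) r Hr))).
  intro n. exact (proj2_sig (constructive_indefinite_description _ (Hd (y n) r Hr))).
Qed.

Lemma iter_comm {X Xh : Type} (f : X -> X) (fh : Xh -> Xh) (i : X -> Xh) :
  (forall x, fh (i x) = i (f x)) -> forall n z, iter fh n (i z) = i (iter f n z).
Proof.
  intros H n z; induction n; simpl; auto. rewrite IHn; auto.
Qed.

Theorem theorem2p7 (X : Type) (d : X -> X -> R) (f : X -> X)
  (Xh : Type) (dh : Xh -> Xh -> R) (i : X -> Xh) (fh : Xh -> Xh) :
  is_metric d -> separable d ->
  uniformly_continuous d d f ->
  is_completion d dh i ->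
  uniformly_continuous dh dh fh ->
  (forall x, fh (i x) = i (f x)) ->
  (shadowing_property d f -> shadowing_property dh fh) /\
  (finite_shadowing_property d f -> finite_shadowing_property dh fh).
Proof.
  intros _ _ _ [[_ [_ [Hsym Htri]]] [_ [Hiso Hdense]]] Huc Hcomm.
  split.
  - intros Hs eps Heps.
    destruct (Hs (eps/2)) as [dl [Hdl Hsh]]; [lra|].
    destruct (Huc (dl/3)) as [eta [Heta Hfh]]; [lra|].
    exists (dl/3). split; [lra|].
    intros y Hy.
    destruct (approx_seq dh i Hdense y (Rmin eta (Rmin (dl/3) (eps/4))))
      as [x Hx].
    { repeat apply Rmin_pos; lra. }
    assert (Hx1 : forall n, dh (i (x n)) (y n) < eta).
    { intro n; specialize (Hx n); pose proof (Rmin_l eta (Rmin (dl/3) (eps/4))); lra. }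
    assert (Hx2 : forall n, dh (i (x n)) (y n) < dl/3).
    { intro n; specialize (Hx n); pose proof (Rmin_r eta (Rmin (dl/3) (eps/4)));
      pose proof (Rmin_l (dl/3) (eps/4)); lra. }
    assert (Hx3 : forall n, dh (i (x n)) (y n) < eps/4).
    { intro n; specialize (Hx n); pose proof (Rmin_r eta (Rmin (dl/3) (eps/4)));
      pose proof (Rmin_r (dl/3) (eps/4)); lra. }
    destruct (Hsh x) as [z Hz].
    { intro n. rewrite <- Hiso, <- Hcomm.
      pose proof (Htri (fh (i (x n))) (fh (y n)) (i (x (S n)))).
      pose proof (Htri (fh (y n)) (y (S n)) (i (x (S n)))).
      pose proof (Hfh _ _ (Hx1 n)). pose proof (Hy n).
      pose proof (Hx2 (S n)). rewrite (Hsym (y (S n))) in *. lra. }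
    exists (i z). intro n. rewrite (iter_comm f fh i Hcomm).
    pose proof (Htri (i (iter f n z)) (i (x n)) (y n)).
    rewrite Hiso in *. pose proof (Hz n). pose proof (Hx3 n). lra.
  - intros Hs eps Heps.
    destruct (Hs (eps/2)) as [dl [Hdl Hsh]]; [lra|].
    destruct (Huc (dl/3)) as [eta [Heta Hfh]]; [lra|].
    exists (dl/3). split; [lra|].
    intros N y Hy.
    destruct (approx_seq dh i Hdense y (Rmin eta (Rmin (dl/3) (eps/4))))
      as [x Hx].
    { repeat apply Rmin_pos; lra. }
    assert (Hx1 : forall n, dh (i (x n)) (y n) < eta).
    { intro n; specialize (Hx n); pose proof (Rmin_l eta (Rmin (dl/3) (eps/4))); lra. }
    assert (Hx2 : forall n, dh (i (x n)) (y n) < dl/3).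
    { intro n; specialize (Hx n); pose proof (Rmin_r eta (Rmin (dl/3) (eps/4)));
      pose proof (Rmin_l (dl/3) (eps/4)); lra. }
    assert (Hx3 : forall n, dh (i (x n)) (y n) < eps/4).
    { intro n; specialize (Hx n); pose proof (Rmin_r eta (Rmin (dl/3) (eps/4)));
      pose proof (Rmin_r (dl/3) (eps/4)); lra. }
    destruct (Hsh N x) as [z Hz].
    { intros n Hn. rewrite <- Hiso, <- Hcomm.
      pose proof (Htri (fh (i (x n))) (fh (y n)) (i (x (S n)))).
      pose proof (Htri (fh (y n)) (y (S n)) (i (x (S n)))).
      pose proof (Hfh _ _ (Hx1 n)). pose proof (Hy n Hn).
      pose proof (Hx2 (S n)). rewrite (Hsym (y (S n))) in *. lra. }
    exists (i z). intros n Hn. rewrite (iter_comm f fh i Hcomm).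
    pose proof (Htri (i (iter f n z)) (i (x n)) (y n)).
    rewrite Hiso in *. pose proof (Hz n Hn). pose proof (Hx3 n). lra.
Qed.
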